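(* In the instance constructed below, consider any feasible 2DKR packing (rotations allowed) that contains $2k$ rectangles. Then it does not contain both a horizontally oriented and a vertically oriented rectangle; i.e., either all packed rectangles are vertically oriented or all are horizontally oriented.
   Context: Let $k\ge 9$ be an odd integer and $\mathcal A$ a multiset of $n$ positive integers; let $M=\max_{a\in\mathcal A}a$ and $N=2Mk^4$, $K=[0,N]\times[0,N]$. For each element $a$ of $\mathcal A$ (counted with multiplicity) create two items (rectangles) $R_a$ with width $w(R_a)=N/k+a$ and height $h(R_a)=N/2-a$, and $R'_a$ with width $w(R'_a)=N/k-a$ and height $h(R'_a)=N/2+a$, each of profit $1$. A feasible 2DKR packing places a subset of the items as pairwise disjoint open axis-parallel rectangles inside $K$, each either unrotated or rotated by $90^\circ$. A packed rectangle $i$ is oriented vertically if it is placed unrotated (placed width $w(i)$, placed height $h(i)$, which here satisfies placed height $>$ placed width), and oriented horizontally otherwise. *)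

(* Defs.v *)
From Stdlib Require Import Reals List Arith Lia.
Open Scope R_scope.

(* The multiset A of n positive integers is a list of naturals (order irrelevant);
   element i of A is (nth i A 0), for i < length A. *)
Definition maxA (A : list nat) : nat := fold_right Nat.max 0%nat A.

Definition bigN (k : nat) (A : list nat) : R := INR (2 * maxA A * k ^ 4).

(* An item is (i, b): i indexes an element a of A (counted with multiplicity);
   b = false is R_a, b = true is R'_a. *)
Definition item : Type := (nat * bool)%type.

Definition elt (A : list nat) (it : item) : R := INR (nth (fst it) A 0%nat).

Definition item_w (k : nat) (A : list nat) (it : item) : R :=
  if snd it then bigN k A / INR k - elt A it else bigN k A / INR k + elt A it.

Definition item_h (k : nat) (A : list nat) (it : item) : R :=
  if snd it then bigN k A / 2 + elt A it else bigN k A / 2 - elt A it.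

Record placement : Type := mkPlacement {
  pl_item : item; pl_x : R; pl_y : R; pl_rot : bool }.

Definition placed_w (k : nat) (A : list nat) (p : placement) : R :=
  if pl_rot p then item_h k A (pl_item p) else item_w k A (pl_item p).
Definition placed_h (k : nat) (A : list nat) (p : placement) : R :=
  if pl_rot p then item_w k A (pl_item p) else item_h k A (pl_item p).

Definition in_open (k : nat) (A : list nat) (p : placement) (px py : R) : Prop :=
  pl_x p < px < pl_x p + placed_w k A p /\ pl_y p < py < pl_y p + placed_h k A p.

Definition inside_K (k : nat) (A : list nat) (p : placement) : Prop :=
  0 <= pl_x p /\ pl_x p + placed_w k A p <= bigN k A /\
  0 <= pl_y p /\ pl_y p + placed_h k A p <= bigN k A.

Definition feasible_packing (k : nat) (A : list nat) (P : list placement) : Prop :=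
  NoDup (map pl_item P) /\
  (forall p, In p P -> (fst (pl_item p) < length A)%nat) /\
  (forall p, In p P -> inside_K k A p) /\
  (forall i j, (i < length P)%nat -> (j < length P)%nat -> i <> j ->
     forall p q, nth_error P i = Some p -> nth_error P j = Some q ->
     ~ (exists px py, in_open k A p px py /\ in_open k A q px py)).

Definition vertical (p : placement) : Prop := pl_rot p = false.
Definition horizontal (p : placement) : Prop := pl_rot p = true.

(* Main.v *)
Require Import Defs.
From Stdlib Require Import Reals List Arith Lia.
Open Scope R_scope.
From Stdlib Require Import Lra Psatz.

Fixpoint sumn (n:nat) (f:nat->R) : R :=
  match n with O => 0 | S m => sumn m f + f m end.
Fixpoint sumL (l:list placement) (f:placement->R) : R :=
  match l with nil => 0 | r::l' => f r + sumL l' f end.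

Lemma sumn_le n f g : (forall i, (i<n)%nat -> f i <= g i) -> sumn n f <= sumn n g.
Proof. induction n; simpl; intros H. lra. assert (H1:=H n (Nat.lt_succ_diag_r n)).
  assert (sumn n f <= sumn n g) by (apply IHn; intros; apply H; lia). lra. Qed.
Lemma sumn_ext n f g : (forall i, (i<n)%nat -> f i = g i) -> sumn n f = sumn n g.
Proof. induction n; simpl; intros H. lra. rewrite IHn by (intros; apply H; lia).
  rewrite H by lia. lra. Qed.
Lemma sumn_plus n f g : sumn n (fun i => f i + g i) = sumn n f + sumn n g.
Proof. induction n; simpl. lra. rewrite IHn. lra. Qed.
Lemma sumn_scal n c f : sumn n (fun i => c * f i) = c * sumn n f.
Proof. induction n; simpl. lra. rewrite IHn. lra. Qed.
Lemma sumn_const n c : sumn n (fun _ => c) = INR n * c.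
Proof. induction n; simpl sumn. simpl; lra. rewrite IHn, S_INR. lra. Qed.
Lemma sumn_minus n f g : sumn n (fun i => f i - g i) = sumn n f - sumn n g.
Proof. induction n; simpl. lra. rewrite IHn. lra. Qed.
Lemma sumn_tele n f : sumn n (fun i => f (S i) - f i) = f n - f O.
Proof. induction n; simpl. lra. rewrite IHn. lra. Qed.
Lemma sumn_swap n m f : sumn n (fun i => sumn m (fun j => f i j)) = sumn m (fun j => sumn n (fun i => f i j)).
Proof. induction n; simpl. induction m; simpl; lra. rewrite IHn, <- sumn_plus. reflexivity. Qed.
Lemma sumn_nonneg n f : (forall i, (i<n)%nat -> 0 <= f i) -> 0 <= sumn n f.
Proof. intros H. replace 0 with (sumn n (fun _ => 0)). apply sumn_le; auto.
  rewrite sumn_const; lra. Qed.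

Lemma sumL_le l f g : (forall r, In r l -> f r <= g r) -> sumL l f <= sumL l g.
Proof. induction l; simpl; intros H. lra. assert (f a <= g a) by auto.
  assert (sumL l f <= sumL l g) by auto. lra. Qed.
Lemma sumL_ext l f g : (forall r, In r l -> f r = g r) -> sumL l f = sumL l g.
Proof. induction l; simpl; intros H. lra. rewrite H, IHl; auto. Qed.
Lemma sumL_plus l f g : sumL l (fun r => f r + g r) = sumL l f + sumL l g.
Proof. induction l; simpl. lra. rewrite IHl. lra. Qed.
Lemma sumL_scal l c f : sumL l (fun r => c * f r) = c * sumL l f.
Proof. induction l; simpl. lra. rewrite IHl. lra. Qed.
Lemma sumL_map l g f : sumL (map g l) f = sumL l (fun r => f (g r)).
Proof. induction l; simpl; congruence. Qed.
Lemma sumL_zero l f : (forall r, In r l -> f r = 0) -> sumL l f = 0.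
Proof. induction l; simpl; intros H. lra. rewrite H, IHl; auto. lra. Qed.
Lemma sumL_ge_const l f c : (forall r, In r l -> c <= f r) -> INR (length l) * c <= sumL l f.
Proof. induction l; simpl length; simpl sumL; intros H. simpl; lra.
  rewrite S_INR. assert (c <= f a) by (apply H; left; auto). assert (INR (length l) * c <= sumL l f) by (apply IHl; intros; apply H; right; auto). lra. Qed.
Lemma sumL_nonneg l f : (forall r, In r l -> 0 <= f r) -> 0 <= sumL l f.
Proof. intros H. replace 0 with (INR (length l) * 0) by lra. apply sumL_ge_const; auto. Qed.
Lemma sumL_ge_one l f q : (forall r, In r l -> 0 <= f r) -> In q l -> 1 <= f q -> 1 <= sumL l f.
Proof. induction l; simpl; intros H Hq H1. contradiction.
  destruct Hq as [<-|Hq]. assert (0 <= sumL l f) by (apply sumL_nonneg; auto). lra.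
  assert (1 <= sumL l f) by auto. assert (0<= f a) by auto. lra. Qed.
Lemma sumn_sumL n l f : sumn n (fun i => sumL l (fun r => f i r)) = sumL l (fun r => sumn n (fun i => f i r)).
Proof. induction n; simpl. rewrite sumL_zero; auto.
  rewrite IHn, <- sumL_plus. reflexivity. Qed.
Lemma sumL_nat l f : (forall r, In r l -> f r = 0 \/ f r = 1) -> exists n, sumL l f = INR n.
Proof. induction l; simpl; intros H. exists O; reflexivity.
  destruct IHl as [n Hn]; auto. destruct (H a (or_introl eq_refl)) as [E|E]; rewrite E, Hn.
  exists n; lra. exists (S n); rewrite S_INR; lra. Qed.

Definition ltb (a b:R) : bool := if Rlt_dec a b then true else false.
Definition inb a w x := andb (ltb a x) (ltb x (a+w)).
Definition b2r (b:bool) : R := if b then 1 else 0.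
Lemma inb_true a w x : inb a w x = true <-> a < x < a + w.
Proof. unfold inb, ltb. destruct (Rlt_dec a x), (Rlt_dec x (a+w)); simpl; split; intros; try lra; try discriminate; auto. Qed.
Lemma inb_false a w x : inb a w x = false -> x <= a \/ a + w <= x.
Proof. unfold inb, ltb. destruct (Rlt_dec a x), (Rlt_dec x (a+w)); simpl; intros; try discriminate; lra. Qed.

Definition clamp (t a b : R) := Rmin (Rmax t a) b.

Lemma cnt_lower n a w : 0 <= a -> a + w <= INR n ->
  w - 1 <= sumn (S n) (fun x => b2r (inb a w (INR x))).
Proof.
  intros Ha Hw. destruct (Rlt_dec w 1).
  { assert (0 <= sumn (S n) (fun x => b2r (inb a w (INR x)))).
    apply sumn_nonneg; intros; unfold b2r; destruct inb; lra. lra. }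
  apply Rle_trans with (sumn (S n) (fun x => clamp (INR (S x)) (a+1) (a+w) - clamp (INR x) (a+1) (a+w))).
  { rewrite (sumn_tele (S n) (fun x => clamp (INR x) (a+1) (a+w))). rewrite S_INR. simpl INR.
    unfold clamp, Rmin, Rmax; repeat destruct Rle_dec; lra. }
  apply sumn_le; intros x _. rewrite S_INR. unfold b2r. destruct (inb a w (INR x)) eqn:E.
  - apply inb_true in E. unfold clamp, Rmin, Rmax; repeat destruct Rle_dec; lra.
  - apply inb_false in E. unfold clamp, Rmin, Rmax; repeat destruct Rle_dec; lra.
Qed.

Lemma cnt_upper n a w : 0 <= w ->
  sumn n (fun x => b2r (inb a w (INR x))) <= w + 1.
Proof.
  intros Hw.
  apply Rle_trans with (sumn n (fun x => clamp (INR (S x)) a (a+w+1) - clamp (INR x) a (a+w+1))).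
  { apply sumn_le; intros x _. rewrite S_INR. unfold b2r. destruct (inb a w (INR x)) eqn:E.
  - apply inb_true in E. unfold clamp, Rmin, Rmax; repeat destruct Rle_dec; lra.
  - unfold clamp, Rmin, Rmax; repeat destruct Rle_dec; lra. }
  rewrite (sumn_tele n (fun x => clamp (INR x) a (a+w+1))).
  unfold clamp, Rmin, Rmax; repeat destruct Rle_dec; lra.
Qed.

Definition indX k A r (x:nat) := b2r (inb (pl_x r) (placed_w k A r) (INR x)).
Definition indY k A r (y:nat) := b2r (inb (pl_y r) (placed_h k A r) (INR y)).
Definition cov k A P x y := sumL P (fun r => indX k A r x * indY k A r y).

Definition PW k A (P : list placement) := forall i j, (i < length P)%nat -> (j < length P)%nat -> i <> j ->
     forall p q, nth_error P i = Some p -> nth_error P j = Some q ->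
     ~ (exists px py, in_open k A p px py /\ in_open k A q px py).

Lemma b2r01 b : b2r b = 0 \/ b2r b = 1.
Proof. destruct b; simpl; auto. Qed.

Lemma cov_le1 k A P x y : PW k A P -> cov k A P x y <= 1.
Proof.
  unfold cov. induction P as [|p P IH]; intros H; simpl. lra.
  assert (HP : PW k A P).
  { intros i j Hi Hj Hij p' q' E1 E2. apply (H (S i) (S j)); simpl; auto; lia. }
  specialize (IH HP). unfold indX, indY in IH |- *. destruct (inb (pl_x p) (placed_w k A p) (INR x)) eqn:E1;
  destruct (inb (pl_y p) (placed_h k A p) (INR y)) eqn:E2; simpl b2r at 1 2; try lra.
  rewrite sumL_zero. lra.
  intros q Hq. destruct (In_nth_error _ _ Hq) as [j Hj].
  assert (Hl : (j < length P)%nat) by (apply nth_error_Some; congruence).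
  destruct (inb (pl_x q) (placed_w k A q) (INR x)) eqn:F1;
  destruct (inb (pl_y q) (placed_h k A q) (INR y)) eqn:F2; simpl b2r; try lra.
  exfalso. apply (H O (S j)) with p q; simpl; auto; try lia.
  apply inb_true in E1, E2, F1, F2. exists (INR x), (INR y). unfold in_open; tauto.
Qed.

Definition trp (r:placement) := mkPlacement (pl_item r) (pl_y r) (pl_x r) (negb (pl_rot r)).
Lemma trp_w k A r : placed_w k A (trp r) = placed_h k A r.
Proof. unfold placed_w, placed_h, trp; simpl; destruct (pl_rot r); reflexivity. Qed.
Lemma trp_h k A r : placed_h k A (trp r) = placed_w k A r.
Proof. unfold placed_w, placed_h, trp; simpl; destruct (pl_rot r); reflexivity. Qed.
Lemma trp_indX k A r x : indX k A (trp r) x = indY k A r x.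
Proof. unfold indX, indY. rewrite trp_w. reflexivity. Qed.
Lemma trp_indY k A r x : indY k A (trp r) x = indX k A r x.
Proof. unfold indX, indY. rewrite trp_h. reflexivity. Qed.
Lemma trp_cov k A P x y : cov k A (map trp P) x y = cov k A P y x.
Proof. unfold cov. rewrite sumL_map. apply sumL_ext; intros.
  rewrite trp_indX, trp_indY. lra. Qed.

Lemma row_cov k A P n y : sumn n (fun x => cov k A P x y) =
  sumL P (fun r => indY k A r y * sumn n (fun x => indX k A r x)).
Proof. unfold cov. rewrite sumn_sumL. apply sumL_ext; intros.
  rewrite <- sumn_scal. apply sumn_ext; intros; lra. Qed.

Lemma row_lemma k A P (Nn t:nat) (s L M: R) (y:nat) :
  (forall r, In r P -> 0 <= pl_x r /\ pl_x r + placed_w k A r <= INR Nn /\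
      (pl_rot r = false -> s - M <= placed_w k A r <= s + M) /\
      (pl_rot r = true -> L - M <= placed_w k A r <= L + M)) ->
  (forall x, cov k A P x y <= 1) ->
  2 * L = INR Nn -> INR Nn = (2 * INR t + 1) * s ->
  0 <= M -> 0 <= s - M - 1 -> s <= L ->
  2*(L-M-1) + (s-M-1) > INR Nn + 1 ->
  (L-M-1) + (INR t+1)*(s-M-1) > INR Nn + 1 ->
  (exists q, In q P /\ pl_rot q = true /\ indY k A q y = 1) ->
  (exists p, In p P /\ pl_rot p = false /\ indY k A p y = 1) ->
  INR Nn + 1 - (L+M+1) - INR t * (s+M+1) <= sumn (S Nn) (fun x => 1 - cov k A P x y).
Proof.
  intros Hb Hc HL Hs HM Hs1 HsL H2 H3 [q [Hq [Rq Iq]]] [p [Hp [Rp Ip]]].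
  rewrite sumn_minus, sumn_const, row_cov.
  set (CX := fun r => sumn (S Nn) (fun x => indX k A r x)).
  set (H := sumL P (fun r => indY k A r y * b2r (pl_rot r))).
  set (V := sumL P (fun r => indY k A r y * b2r (negb (pl_rot r)))).
  assert (Hlow : (L-M-1) * H + (s-M-1) * V <= sumL P (fun r => indY k A r y * CX r)).
  { unfold H, V. rewrite <- !sumL_scal, <- sumL_plus. apply sumL_le. intros r Hr.
    destruct (Hb r Hr) as [B1 [B2 [B3 B4]]].
    assert (placed_w k A r - 1 <= CX r) by (apply cnt_lower; auto).
    destruct (b2r01 (inb (pl_y r) (placed_h k A r) (INR y))) as [E|E]; unfold indY; rewrite E;
    destruct (pl_rot r); simpl b2r; try specialize (B3 eq_refl); try specialize (B4 eq_refl); nra. }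
  assert (Hup : sumL P (fun r => indY k A r y * CX r) <= (L+M+1) * H + (s+M+1) * V).
  { unfold H, V. rewrite <- !sumL_scal, <- sumL_plus. apply sumL_le. intros r Hr.
    destruct (Hb r Hr) as [B1 [B2 [B3 B4]]].
    assert (0 <= placed_w k A r) by (destruct (pl_rot r); [specialize (B4 eq_refl)|specialize (B3 eq_refl)]; lra).
    assert (CX r <= placed_w k A r + 1) by (apply cnt_upper; auto).
    destruct (b2r01 (inb (pl_y r) (placed_h k A r) (INR y))) as [E|E]; unfold indY; rewrite E;
    destruct (pl_rot r); simpl b2r; try specialize (B3 eq_refl); try specialize (B4 eq_refl); nra. }
  assert (Htot : sumL P (fun r => indY k A r y * CX r) <= INR (S Nn)).
  { unfold CX. rewrite <- row_cov. replace (INR (S Nn)) with (INR (S Nn) * 1) by lra.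
    rewrite <- sumn_const. apply sumn_le; auto. }
  assert (Hnat : forall g : placement -> bool, forall r, In r P ->
     indY k A r y * b2r (g r) = 0 \/ indY k A r y * b2r (g r) = 1).
  { intros g r _. unfold indY. destruct (b2r01 (inb (pl_y r) (placed_h k A r) (INR y))) as [E|E]; rewrite E;
    destruct (g r); simpl; lra. }
  destruct (sumL_nat _ _ (Hnat (fun r => pl_rot r))) as [h Eh].
  destruct (sumL_nat _ _ (Hnat (fun r => negb (pl_rot r)))) as [v Ev].
  fold H in Eh. fold V in Ev.
  assert (H1 : 1 <= H). { unfold H. apply sumL_ge_one with q; auto.
    intros r _; unfold indY; destruct (b2r01 (inb (pl_y r) (placed_h k A r) (INR y))) as [E|E]; rewrite E;
    destruct (pl_rot r); simpl; lra. rewrite Iq, Rq; simpl; lra. }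
  assert (V1 : 1 <= V). { unfold V. apply sumL_ge_one with p; auto.
    intros r _; unfold indY; destruct (b2r01 (inb (pl_y r) (placed_h k A r) (INR y))) as [E|E]; rewrite E;
    destruct (pl_rot r); simpl; lra. rewrite Ip, Rp; simpl; lra. }
  rewrite S_INR in Htot.
  assert (Hh : h = 1%nat).
  { destruct h as [|[|h]]. simpl in Eh; lra. reflexivity.
    exfalso. assert (2 <= H) by (rewrite Eh, !S_INR; pose proof (pos_INR h); lra). nra. }
  subst h. simpl in Eh.
  assert (Hv : (v <= t)%nat).
  { destruct (le_lt_dec v t); auto. exfalso.
    assert (INR t + 1 <= V) by (rewrite Ev, <- S_INR; apply le_INR; lia). nra. }
  apply le_INR in Hv. rewrite <- Ev in Hv. rewrite Eh in Hup.
  assert ((s+M+1) * V <= (s+M+1) * INR t) by (apply Rmult_le_compat_l; lra). rewrite S_INR. change (sumL P (fun r => indY k A r y * sumn (S Nn) (fun x => indX k A r x))) with (sumL P (fun r => indY k A r y * CX r)). lra.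
Qed.

Lemma col_lemma k A P (Nn t:nat) (s L M: R) (x:nat) :
  (forall r, In r P -> 0 <= pl_y r /\ pl_y r + placed_h k A r <= INR Nn /\
      (pl_rot r = true -> s - M <= placed_h k A r <= s + M) /\
      (pl_rot r = false -> L - M <= placed_h k A r <= L + M)) ->
  (forall y, cov k A P x y <= 1) ->
  2 * L = INR Nn -> INR Nn = (2 * INR t + 1) * s ->
  0 <= M -> 0 <= s - M - 1 -> s <= L ->
  2*(L-M-1) + (s-M-1) > INR Nn + 1 ->
  (L-M-1) + (INR t+1)*(s-M-1) > INR Nn + 1 ->
  (exists q, In q P /\ pl_rot q = false /\ indX k A q x = 1) ->
  (exists p, In p P /\ pl_rot p = true /\ indX k A p x = 1) ->
  INR Nn + 1 - (L+M+1) - INR t * (s+M+1) <= sumn (S Nn) (fun y => 1 - cov k A P x y).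
Proof.
  intros Hb Hc HL Hs HM Hs1 HsL H2 H3 [q [Hq [Rq Iq]]] [p [Hp [Rp Ip]]].
  rewrite (sumn_ext _ _ (fun y => 1 - cov k A (map trp P) y x)) by (intros; rewrite trp_cov; auto).
  apply row_lemma with (s:=s) (L:=L); auto.
  - intros r' Hr'. apply in_map_iff in Hr'. destruct Hr' as [r [<- Hr]].
    rewrite trp_w. simpl. destruct (Hb r Hr) as [B1 [B2 [B3 B4]]].
    destruct (pl_rot r); simpl; repeat split; try lra; intros E; try discriminate; first [apply B3; now auto | apply B4; now auto].
  - intros y. rewrite trp_cov. auto.
  - exists (trp q). split. apply in_map; auto. simpl. rewrite Rq, trp_indY. auto.
  - exists (trp p). split. apply in_map; auto. simpl. rewrite Rp, trp_indY. auto.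
Qed.

Lemma total_cov k A P n m : sumn n (fun x => sumn m (fun y => cov k A P x y)) =
  sumL P (fun r => sumn n (fun x => indX k A r x) * sumn m (fun y => indY k A r y)).
Proof.
  unfold cov. rewrite (sumn_ext _ _ (fun x => sumL P (fun r => indX k A r x * sumn m (fun y => indY k A r y)))).
  rewrite sumn_sumL. apply sumL_ext; intros. rewrite <- sumn_scal.
  transitivity (sumn m (fun y => indY k A r y) * sumn n (fun x => indX k A r x)).
  rewrite <- sumn_scal. apply sumn_ext; intros; lra.
  rewrite Rmult_comm, <- sumn_scal. apply sumn_ext; intros; lra.
  intros x _. rewrite sumn_sumL. apply sumL_ext; intros. rewrite <- sumn_scal. reflexivity.
Qed.

Lemma numeric (m K t : R) : 1 <= m -> 9 <= K -> K = 2*t+1 ->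
  let s := 2*m*K^3 in let L := m*K^4 in let N := 2*m*K^4 in
  let D := N + 1 - (L+m+1) - t*(s+m+1) in
  let Q := L - m - 1 in
  let Ub := (N+1)*(N+1) - 2*K*(s*L - m*L - m*m - L - s - 2*m) in
  0 <= s - m - 1 /\ s <= L /\ 2*(L-m-1) + (s-m-1) > N + 1 /\
  (L-m-1) + (t+1)*(s-m-1) > N+1 /\ N = (2*t+1)*s /\ 2*L = N /\
  0 < D /\ Ub < D*Q/2 /\ Ub < Q*Q/4.
Proof.
  intros Hm HK Ht s L N D Q Ub.
  assert (K2 : 81 <= K^2) by nra.
  assert (K3 : 729 <= K^3) by (replace (K^3) with (K^2*K) by ring; nra).
  assert (E4 : K^4 = K^3 * K) by ring.
  assert (E5 : K^5 = K^4 * K) by ring.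
  assert (K4 : 9 * K^3 <= K^4) by (rewrite E4; nra).
  assert (K5 : 9 * K^4 <= K^5) by (rewrite E5; nra).
  assert (mK3 : 729 * m <= m * K^3) by nra.
  assert (HD : D = m*K^3 - (t+1)*m - t) by (unfold D, N, L, s; rewrite E4, Ht; ring).
  assert (HQ : Q = m*K^4 - m - 1) by reflexivity.
  assert (HUb : Ub = 2*N + 1 + 2*K*(m*m*K^4 + m*m + m*K^4 + 2*m*K^3 + 2*m))
    by (unfold Ub, N, L, s; rewrite E4; ring).
  assert (Dlow : m*K^3/2 <= D).
  { rewrite HD. assert (t <= K) by lra. assert (2 * K * m <= m*K^3 / 2).
    { replace (K^3) with (K^2*K) by ring. nra. } nra. }
  assert (Qlow : m*K^4/2 <= Q) by (rewrite HQ; nra).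
  assert (Ubup : Ub <= 5 * (m*m*K^5)).
  { rewrite HUb. unfold N.
    assert (mK4 : m * K^4 <= m*m*K^4) by (assert (0 <= K^4) by nra; nra).
    assert (A1 : 6561 <= K^4) by nra.
    assert (A2 : m*m*K^4*9 <= m*m*K^5) by (assert (0 <= m*m) by nra; nra).
    assert (A3 : m*K^3 * 9 <= m * K^4) by nra.
    assert (A4 : K * m*m <= m*m*K^4 / 100) by (assert (0 <= m*m) by nra; nra).
    assert (A5 : K * m <= m*K^4 / 100) by nra.
    nra. }
  assert (P5 : 0 <= m*m*K^5) by (assert (0 <= K^5) by nra; nra).
  repeat split.
  - unfold s. nra.
  - unfold s, L. rewrite E4. nra.
  - unfold N, L, s. nra.
  - unfold N, L, s. rewrite E4, Ht. rewrite Ht in mK3. nra.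
  - unfold N, s. rewrite E4, Ht. ring.
  - unfold N, L. ring.
  - nra.
  - assert (D * Q / 2 >= (m*K^3/2) * (m*K^4/2) / 2) by nra.
    assert ((m*K^3/2) * (m*K^4/2) / 2 = m*m*K^5 * K^2 / 8) by field. nra.
  - assert (Q * Q / 4 >= (m*K^4/2) * (m*K^4/2) / 4) by nra.
    assert ((m*K^4/2) * (m*K^4/2) / 4 = m*m*K^5 * (K^3) / 16) by field. nra.
Qed.

Lemma nth_le_max A i : (nth i A 0 <= maxA A)%nat.
Proof. revert i; induction A; intros [|i]; simpl; try lia. specialize (IHA i). lia. Qed.

Lemma dims k A r (s L M e: R) : s = bigN k A / INR k -> L = bigN k A / 2 -> e = elt A (pl_item r) ->
  0 <= e <= M -> 0 <= s <= L ->
  (pl_rot r = false -> s-M <= placed_w k A r <= s+M /\ L-M <= placed_h k A r <= L+M) /\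
  (pl_rot r = true -> L-M <= placed_w k A r <= L+M /\ s-M <= placed_h k A r <= s+M) /\
  s*L - M*L - M*M <= placed_w k A r * placed_h k A r /\ placed_w k A r + placed_h k A r <= s + L + 2*M.
Proof. intros Hs HL He Hb HsL. unfold placed_w, placed_h, item_w, item_h. rewrite <- Hs, <- HL, <- He.
  destruct (pl_rot r), (snd (pl_item r)); repeat split; intros; try discriminate; nra. Qed.

Definition hasH k A P (y:nat) := b2r (existsb (fun r => andb (pl_rot r) (inb (pl_y r) (placed_h k A r) (INR y))) P).
Definition hasV k A P (x:nat) := b2r (existsb (fun r => andb (negb (pl_rot r)) (inb (pl_x r) (placed_w k A r) (INR x))) P).

Theorem mainTheorem11 (k : nat) (A : list nat) (P : list placement) :
  (9 <= k)%nat -> Nat.odd k = true ->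
  (forall a, In a A -> (0 < a)%nat) ->
  feasible_packing k A P ->
  length P = (2 * k)%nat ->
  ~ ((exists p, In p P /\ horizontal p) /\ (exists q, In q P /\ vertical q)).
Proof.
  intros Hk Hodd Hpos [HND [Hidx [Hin HPW]]] Hlen [[q0 [Hq0 Rq0]] [p0 [Hp0 Rp0]]].
  unfold horizontal in Rq0. unfold vertical in Rp0.
  destruct (proj1 (Nat.odd_spec k) Hodd) as [t Ht].
  assert (HM1 : (1 <= maxA A)%nat).
  { pose proof (Hidx p0 Hp0) as Hi. pose proof (nth_In A 0%nat Hi) as HIn.
    pose proof (Hpos _ HIn). pose proof (nth_le_max A (fst (pl_item p0))). lia. }
  set (Nn := (2 * maxA A * k^4)%nat).
  set (m := INR (maxA A)). set (K := INR k). set (tr := INR t).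
  assert (Hm : 1 <= m) by (unfold m; apply (le_INR 1); auto).
  assert (HK : 9 <= K) by (unfold K; replace 9 with (INR 9) by (simpl; lra); apply le_INR; auto).
  assert (HKt : K = 2*tr+1) by (unfold K, tr; rewrite Ht, plus_INR, mult_INR; simpl; lra).
  assert (HN : bigN k A = 2*m*K^4) by (unfold bigN, m, K; rewrite !mult_INR, pow_INR; simpl; lra).
  assert (HNn : INR Nn = bigN k A) by reflexivity.
  pose proof (numeric m K tr Hm HK HKt) as NUM. cbv zeta in NUM.
  destruct NUM as [N1 [N2 [N3 [N4 [N5 [N6 [N7 [N8 N9]]]]]]]].
  set (s := 2*m*K^3) in *. set (L := m*K^4) in *.
  assert (Es : bigN k A / INR k = s) by (rewrite HN; unfold s; fold K; field; lra).
  assert (EL : bigN k A / 2 = L) by (rewrite HN; unfold L; field).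
  rewrite <- HN, <- HNn in *.
  assert (HR : forall r, In r P ->
    (pl_rot r = false -> s-m <= placed_w k A r <= s+m /\ L-m <= placed_h k A r <= L+m) /\
    (pl_rot r = true -> L-m <= placed_w k A r <= L+m /\ s-m <= placed_h k A r <= s+m) /\
    s*L - m*L - m*m <= placed_w k A r * placed_h k A r /\ placed_w k A r + placed_h k A r <= s + L + 2*m /\
    0 <= pl_x r /\ pl_x r + placed_w k A r <= INR Nn /\ 0 <= pl_y r /\ pl_y r + placed_h k A r <= INR Nn).
  { intros r Hr. destruct (Hin r Hr) as [I1 [I2 [I3 I4]]]. rewrite <- HNn in I2, I4.
    assert (Hs0 : 0 <= s) by lra.
    assert (Hs' : s = bigN k A / INR k) by (rewrite <- HNn; auto).
    assert (HL' : L = bigN k A / 2) by (rewrite <- HNn; auto).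
    assert (He : 0 <= elt A (pl_item r) <= m).
    { split. apply pos_INR. unfold elt, m. apply le_INR; apply nth_le_max. }
    destruct (dims k A r s L m (elt A (pl_item r)) Hs' HL' eq_refl He) as [D1 [D2 [D3 D4]]]; [lra|].
    refine (conj D1 (conj D2 (conj D3 (conj D4 _)))). repeat split; auto. }
  assert (Hc : forall x y, cov k A P x y <= 1) by (intros; apply cov_le1; exact HPW).
  set (D := INR Nn + 1 - (L + m + 1) - tr * (s + m + 1)) in *.
  set (Q := L - m - 1) in *.
  set (G := S Nn).
  set (U := sumn G (fun x => sumn G (fun y => 1 - cov k A P x y))).
  assert (U1 : U <= (INR Nn + 1) * (INR Nn + 1) - 2*K*(s*L - m*L - m*m - L - s - 2*m)).
  { unfold U. rewrite (sumn_ext _ _ (fun x => INR G * 1 - sumn G (fun y => cov k A P x y)))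
      by (intros; rewrite sumn_minus, sumn_const; reflexivity).
    rewrite sumn_minus, sumn_const, total_cov.
    assert (Hs : INR (length P) * (s*L - m*L - m*m - L - s - 2*m) <=
      sumL P (fun r => sumn G (fun x => indX k A r x) * sumn G (fun y => indY k A r y))).
    { apply sumL_ge_const. intros r Hr. destruct (HR r Hr) as [R1 [R2 [R3 [R4 [R5 [R6 [R7 R8]]]]]]].
      assert (C1 : placed_w k A r - 1 <= sumn G (fun x => indX k A r x)) by (apply cnt_lower; auto).
      assert (C2 : placed_h k A r - 1 <= sumn G (fun y => indY k A r y)) by (apply cnt_lower; auto).
      assert (W1 : 1 <= placed_w k A r /\ 1 <= placed_h k A r)
        by (destruct (pl_rot r); [destruct (R2 eq_refl)|destruct (R1 eq_refl)]; lra).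
      destruct W1.
      assert ((placed_w k A r - 1) * (placed_h k A r - 1) <=
        sumn G (fun x => indX k A r x) * sumn G (fun y => indY k A r y)) by (apply Rmult_le_compat; lra).
      nra. }
    rewrite Hlen, mult_INR in Hs. fold K in Hs. replace (INR G) with (INR Nn + 1) by (unfold G; rewrite S_INR; reflexivity). simpl (INR 2) in Hs. nra. }
  assert (Rnn : forall y, 0 <= sumn G (fun x => 1 - cov k A P x y)).
  { intros y. apply sumn_nonneg. intros x _. specialize (Hc x y). lra. }
  assert (Cnn : forall x, 0 <= sumn G (fun y => 1 - cov k A P x y)).
  { intros x. apply sumn_nonneg. intros y _. specialize (Hc x y). lra. }
  assert (Hm0 : 0 <= m) by lra.
  assert (U2 : D * sumn G (fun y => indY k A p0 y * hasH k A P y) <= U).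
  { unfold U. rewrite sumn_swap, <- sumn_scal. apply sumn_le. intros y Hy.
    unfold indY at 1, hasH. destruct (inb (pl_y p0) (placed_h k A p0) (INR y)) eqn:E1;
    destruct (existsb _ P) eqn:E2; simpl b2r; try (specialize (Rnn y); nra).
    rewrite !Rmult_1_r.
    apply existsb_exists in E2. destruct E2 as [q [Hq Eq]]. apply andb_prop in Eq. destruct Eq as [Eq1 Eq2].
    apply (row_lemma k A P Nn t s L m y); auto.
    - intros r Hr. destruct (HR r Hr) as [R1 [R2 [R3 [R4 [R5 [R6 [R7 R8]]]]]]].
      exact (conj R5 (conj R6 (conj (fun E => proj1 (R1 E)) (fun E => proj1 (R2 E))))).
    - exists q. unfold indY; rewrite Eq2; auto.
    - exists p0. unfold indY; rewrite E1; auto. }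
  assert (U3 : D * sumn G (fun x => indX k A q0 x * hasV k A P x) <= U).
  { unfold U. rewrite <- sumn_scal. apply sumn_le. intros x Hx.
    unfold indX at 1, hasV. destruct (inb (pl_x q0) (placed_w k A q0) (INR x)) eqn:E1;
    destruct (existsb _ P) eqn:E2; simpl b2r; try (specialize (Cnn x); nra).
    rewrite !Rmult_1_r.
    apply existsb_exists in E2. destruct E2 as [q [Hq Eq]]. apply andb_prop in Eq. destruct Eq as [Eq1 Eq2].
    apply (col_lemma k A P Nn t s L m x); auto.
    - intros r Hr. destruct (HR r Hr) as [R1 [R2 [R3 [R4 [R5 [R6 [R7 R8]]]]]]].
      exact (conj R7 (conj R8 (conj (fun E => proj2 (R2 E)) (fun E => proj2 (R1 E))))).
    - exists q. destruct (pl_rot q); simpl in Eq1; [discriminate|]. split; auto. unfold indX; rewrite Eq2; auto.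
    - exists q0. unfold indX; rewrite E1; auto. }
  set (GX := sumn G (fun x => indX k A q0 x * (1 - hasV k A P x))).
  set (GY := sumn G (fun y => indY k A p0 y * (1 - hasH k A P y))).
  set (BX := sumn G (fun x => indX k A q0 x * hasV k A P x)) in *.
  set (BY := sumn G (fun y => indY k A p0 y * hasH k A P y)) in *.
  assert (U4 : GX * GY <= U).
  { replace (GX*GY) with (sumn G (fun x => sumn G (fun y =>
       (indX k A q0 x * (1 - hasV k A P x)) * (indY k A p0 y * (1 - hasH k A P y))))).
    2:{ rewrite (sumn_ext _ _ (fun x => GY * (indX k A q0 x * (1 - hasV k A P x)))).
        rewrite sumn_scal; unfold GX; ring.
        intros x _. rewrite sumn_scal. unfold GY. ring. }
    unfold U. apply sumn_le; intros x _. apply sumn_le; intros y _.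
    unfold indX at 1, indY at 1, hasV, hasH.
    destruct (inb (pl_x q0) (placed_w k A q0) (INR x)) eqn:E1;
    destruct (existsb (fun r => andb (negb (pl_rot r)) (inb (pl_x r) (placed_w k A r) (INR x))) P) eqn:E2;
    destruct (inb (pl_y p0) (placed_h k A p0) (INR y)) eqn:E3;
    destruct (existsb (fun r => andb (pl_rot r) (inb (pl_y r) (placed_h k A r) (INR y))) P) eqn:E4;
    simpl b2r; try (specialize (Hc x y); lra).
    assert (cov k A P x y = 0).
    { unfold cov. apply sumL_zero. intros r Hr. unfold indX, indY. destruct (pl_rot r) eqn:Er.
      - destruct (inb (pl_y r) (placed_h k A r) (INR y)) eqn:Ey.
        + exfalso. assert (existsb (fun r => andb (pl_rot r) (inb (pl_y r) (placed_h k A r) (INR y))) P = true)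
            by (apply existsb_exists; exists r; rewrite Er, Ey; auto). congruence.
        + simpl; lra.
      - destruct (inb (pl_x r) (placed_w k A r) (INR x)) eqn:Ex.
        + exfalso. assert (existsb (fun r => andb (negb (pl_rot r)) (inb (pl_x r) (placed_w k A r) (INR x))) P = true)
            by (apply existsb_exists; exists r; rewrite Er, Ex; auto). congruence.
        + simpl; lra. }
    lra. }
  assert (nn : forall b1 b2, 0 <= b2r b1 * b2r b2 /\ 0 <= b2r b1 * (1 - b2r b2)).
  { intros [|] [|]; simpl; lra. }
  assert (GX0 : 0 <= GX) by (apply sumn_nonneg; intros; apply nn).
  assert (GY0 : 0 <= GY) by (apply sumn_nonneg; intros; apply nn).
  assert (BX0 : 0 <= BX) by (apply sumn_nonneg; intros; apply nn).
  assert (BY0 : 0 <= BY) by (apply sumn_nonneg; intros; apply nn).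
  assert (HJ : Q <= GY + BY).
  { unfold GY, BY. rewrite <- sumn_plus.
    rewrite (sumn_ext _ _ (fun y => indY k A p0 y)) by (intros; ring).
    destruct (HR p0 Hp0) as [R1 [R2 [R3 [R4 [R5 [R6 [R7 R8]]]]]]].
    assert (placed_h k A p0 - 1 <= sumn G (fun y => indY k A p0 y)) by (apply cnt_lower; auto).
    destruct (R1 Rp0). unfold Q. lra. }
  assert (HI : Q <= GX + BX).
  { unfold GX, BX. rewrite <- sumn_plus.
    rewrite (sumn_ext _ _ (fun x => indX k A q0 x)) by (intros; ring).
    destruct (HR q0 Hq0) as [R1 [R2 [R3 [R4 [R5 [R6 [R7 R8]]]]]]].
    assert (placed_w k A q0 - 1 <= sumn G (fun x => indX k A q0 x)) by (apply cnt_lower; auto).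
    destruct (R2 Rq0). unfold Q. lra. }
  set (Ub := (INR Nn + 1) * (INR Nn + 1) - 2*K*(s*L - m*L - m*m - L - s - 2*m)) in *.
  destruct (Rle_dec (Q/2) BY).
  { assert (D * (Q/2) <= D * BY) by (apply Rmult_le_compat_l; lra). lra. }
  destruct (Rle_dec (Q/2) BX).
  { assert (D * (Q/2) <= D * BX) by (apply Rmult_le_compat_l; lra). lra. }
  assert (Q/2 * (Q/2) <= GX * GY) by (apply Rmult_le_compat; lra). lra.
Qed.
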